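(* Let $Q$ be a propositional proof system extending $CF$ that is not sound (i.e. $Q$ proves some proposition that is not a tautology). Then $Q$ proves every proposition by a proof of length linear in the length of the proposition.
   Context: Here a (possibly unsound) proof system extending $CF$ is the Circuit Frege system $CF$ (Frege rules on Boolean circuits plus a rule passing from a circuit to any circuit unfolding to the same formula) augmented with a polynomial-time decidable set of axiom schemas, any substitution instance of which may be used as an axiom. Propositions are Boolean circuits. *)

(* Defs.v *)
From Stdlib Require Import List Arith.
Import ListNotations.

Inductive fml : Type :=
| FVar (n : nat) | FTop | FBot
| FNot (a : fml) | FAnd (a b : fml) | FOr (a b : fml) | FImp (a b : fml).

Fixpoint feval (v : nat -> bool) (f : fml) : bool :=
  match f with
  | FVar n => v n
  | FTop => true
  | FBot => false
  | FNot a => negb (feval v a)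
  | FAnd a b => feval v a && feval v b
  | FOr a b => feval v a || feval v b
  | FImp a b => implb (feval v a) (feval v b)
  end.

(** Boolean circuits, represented as straight-line terms with explicit
    sharing: [CLet c d] is the circuit [d] in which the gate [c] may be
    referred to (any number of times) by the de Bruijn reference [CRef 0]
    (references to enclosing lets are shifted as usual). *)
Inductive circ : Type :=
| CVar (n : nat) | CRef (k : nat) | CTop | CBot
| CNot (a : circ) | CAnd (a b : circ) | COr (a b : circ) | CImp (a b : circ)
| CLet (a b : circ).

Fixpoint wf (d : nat) (c : circ) : bool :=
  match c with
  | CRef k => Nat.ltb k d
  | CVar _ | CTop | CBot => true
  | CNot a => wf d a
  | CAnd a b | COr a b | CImp a b => wf d a && wf d b
  | CLet a b => wf d a && wf (S d) b
  end.

(** Propositions are closed circuits. *)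
Definition closed (c : circ) : Prop := wf 0 c = true.

Fixpoint csize (c : circ) : nat :=
  match c with
  | CVar _ | CRef _ | CTop | CBot => 1
  | CNot a => S (csize a)
  | CAnd a b | COr a b | CImp a b | CLet a b => S (csize a + csize b)
  end.

Fixpoint unfold (env : list fml) (c : circ) : fml :=
  match c with
  | CVar n => FVar n
  | CRef k => nth k env FBot
  | CTop => FTop
  | CBot => FBot
  | CNot a => FNot (unfold env a)
  | CAnd a b => FAnd (unfold env a) (unfold env b)
  | COr a b => FOr (unfold env a) (unfold env b)
  | CImp a b => FImp (unfold env a) (unfold env b)
  | CLet a b => unfold (unfold env a :: env) b
  end.

Definition tautology (c : circ) : Prop :=
  forall v : nat -> bool, feval v (unfold [] c) = true.

Fixpoint inst (s : nat -> circ) (c : circ) : circ :=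
  match c with
  | CVar n => s n
  | CRef k => CRef k
  | CTop => CTop
  | CBot => CBot
  | CNot a => CNot (inst s a)
  | CAnd a b => CAnd (inst s a) (inst s b)
  | COr a b => COr (inst s a) (inst s b)
  | CImp a b => CImp (inst s a) (inst s b)
  | CLet a b => CLet (inst s a) (inst s b)
  end.

Definition p := CVar 0.
Definition q := CVar 1.
Definition r := CVar 2.

Definition frege_axioms : list circ :=
  [ CImp p (CImp q p);
    CImp (CImp p (CImp q r)) (CImp (CImp p q) (CImp p r));
    CImp (CAnd p q) p;
    CImp (CAnd p q) q;
    CImp p (CImp q (CAnd p q));
    CImp p (COr p q);
    CImp q (COr p q);
    CImp (CImp p r) (CImp (CImp q r) (CImp (COr p q) r));
    CImp CBot p;
    CTop;
    CImp (CImp p CBot) (CNot p);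
    CImp (CNot p) (CImp p CBot);
    CImp (CImp (CImp p CBot) CBot) p ].

(** The proof system Q = CF + the (decidable) set [Ax] of extra axiom schemas.
    [C] is an axiom of Q if it is a substitution instance (by closed circuits)
    of a Frege axiom schema or of a schema in [Ax]. *)
Definition is_axiom (Ax : circ -> bool) (C : circ) : Prop :=
  exists (phi : circ) (s : nat -> circ),
    (In phi frege_axioms \/ Ax phi = true) /\
    (forall n, closed (s n)) /\
    C = inst s phi.

(** A Q-proof is a sequence of propositions each of which is an axiom,
    follows by modus ponens from two earlier lines, or follows from an
    earlier line unfolding to the same formula (the CF unfolding rule). *)
Definition valid_proof (Ax : circ -> bool) (pi : list circ) : Prop :=
  forall i, i < length pi ->
    let C := nth i pi CTop in
    closed C /\
    (is_axiom Ax C \/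
     (exists j k, j < i /\ k < i /\ nth k pi CTop = CImp (nth j pi CTop) C) \/
     (exists j, j < i /\ unfold [] (nth j pi CTop) = unfold [] C)).

Definition proves (Ax : circ -> bool) (pi : list circ) (A : circ) : Prop :=
  pi <> [] /\ valid_proof Ax pi /\ last pi CTop = A.

Definition plen (pi : list circ) : nat :=
  fold_right (fun C n => csize C + n) 0 pi.

Definition sound (Ax : circ -> bool) : Prop :=
  forall pi A, proves Ax pi A -> tautology A.

(* Main.v *)
Require Import Defs.
From Stdlib Require Import List Arith.
From Stdlib Require Import Lia Classical Bool.
Import ListNotations.

Fixpoint emb (f : fml) : circ :=
  match f with
  | FVar n => CVar n | FTop => CTop | FBot => CBot
  | FNot a => CNot (emb a)
  | FAnd a b => CAnd (emb a) (emb b)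
  | FOr a b => COr (emb a) (emb b)
  | FImp a b => CImp (emb a) (emb b)
  end.

Fixpoint fsub (t : nat -> fml) (f : fml) : fml :=
  match f with
  | FVar n => t n | FTop => FTop | FBot => FBot
  | FNot a => FNot (fsub t a)
  | FAnd a b => FAnd (fsub t a) (fsub t b)
  | FOr a b => FOr (fsub t a) (fsub t b)
  | FImp a b => FImp (fsub t a) (fsub t b)
  end.

Lemma wf_emb d f : wf d (emb f) = true.
Proof. induction f; simpl; rewrite ?IHf, ?IHf1, ?IHf2; auto. Qed.

Lemma cemb f : closed (emb f).
Proof. apply wf_emb. Qed.

Lemma cbot : closed CBot. Proof. reflexivity. Qed.
Lemma ctop : closed CTop. Proof. reflexivity. Qed.
#[local] Hint Resolve cemb cbot ctop : core.

Lemma unfold_emb env f : unfold env (emb f) = f.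
Proof. induction f; simpl; congruence. Qed.

Lemma wf_mono c : forall d d', wf d c = true -> d <= d' -> wf d' c = true.
Proof.
  induction c; simpl; intros d d' H Hd; auto.
  - apply Nat.ltb_lt in H; apply Nat.ltb_lt; lia.
  - eauto.
  - apply andb_true_iff in H as [H1 H2]; apply andb_true_iff; split; eauto.
  - apply andb_true_iff in H as [H1 H2]; apply andb_true_iff; split; eauto.
  - apply andb_true_iff in H as [H1 H2]; apply andb_true_iff; split; eauto.
  - apply andb_true_iff in H as [H1 H2]; apply andb_true_iff; split; eauto.
    apply (IHc2 (S d)); auto; lia.
Qed.

Lemma unfold_closed_gen c : forall d e1 e, wf d c = true -> length e1 = d ->
  unfold (e1 ++ e) c = unfold e1 c.
Proof.
  induction c; simpl; intros d e1 e H Hl; auto;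
    try (apply andb_true_iff in H as [H1 H2]).
  - apply app_nth1; apply Nat.ltb_lt in H; lia.
  - rewrite (IHc d e1 e); auto.
  - rewrite (IHc1 d e1 e), (IHc2 d e1 e); auto.
  - rewrite (IHc1 d e1 e), (IHc2 d e1 e); auto.
  - rewrite (IHc1 d e1 e), (IHc2 d e1 e); auto.
  - rewrite (IHc1 d e1 e); auto.
    apply (IHc2 (S d) (unfold e1 c1 :: e1) e); simpl; auto.
Qed.

Lemma unfold_closed c e : closed c -> unfold e c = unfold [] c.
Proof. intro H. apply (unfold_closed_gen c 0 [] e); auto. Qed.

Lemma unfold_inst (s : nat -> circ) (Hs : forall n, closed (s n)) t
  (Ht : forall n, unfold [] (s n) = t n) c :
  forall env, unfold (map (fsub t) env) (inst s c) = fsub t (unfold env c).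
Proof.
  induction c; simpl; intros env.
  - rewrite unfold_closed; auto.
  - exact (map_nth (fsub t) env FBot k).
  - reflexivity.
  - reflexivity.
  - rewrite IHc; reflexivity.
  - rewrite IHc1, IHc2; reflexivity.
  - rewrite IHc1, IHc2; reflexivity.
  - rewrite IHc1, IHc2; reflexivity.
  - rewrite IHc1. apply (IHc2 (unfold env c1 :: env)).
Qed.

Lemma wf_inst s (Hs : forall n, closed (s n)) c :
  forall d, wf d c = true -> wf d (inst s c) = true.
Proof.
  induction c; simpl; intros d H; auto;
    try (apply andb_true_iff in H as [H1 H2]; apply andb_true_iff; split; auto).
  apply (wf_mono _ 0); [apply Hs| lia].
Qed.

Lemma inst_inst s1 s2 c : inst s1 (inst s2 c) = inst (fun n => inst s1 (s2 n)) c.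
Proof. induction c; simpl; congruence. Qed.

Lemma valid_map Ax s (Hs : forall n, closed (s n)) pi :
  valid_proof Ax pi -> valid_proof Ax (map (inst s) pi).
Proof.
  unfold valid_proof; intros H i Hi.
  rewrite length_map in Hi. specialize (H i Hi). cbv zeta in *.
  assert (E : forall m, nth m (map (inst s) pi) CTop = inst s (nth m pi CTop))
    by (intro m; exact (map_nth (inst s) pi CTop m)).
  rewrite !E.
  destruct H as [Hc [Ha | [Hm | Hu]]]; (split; [unfold closed; apply wf_inst; [exact Hs|exact Hc]|]).
  - left. destruct Ha as (phi & s' & Hphi & Hsc & Heq).
    exists phi, (fun n => inst s (s' n)). split; auto. split.
    + intro n; unfold closed; apply wf_inst; [exact Hs|apply Hsc].
    + rewrite Heq; apply inst_inst.
  - right; left. destruct Hm as (j & k & Hj & Hk & Heq).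
    exists j, k. rewrite !E, Heq. auto.
  - right; right. destruct Hu as (j & Hj & Heq). exists j; split; auto.
    rewrite E.
    pose proof (unfold_inst s Hs (fun n => unfold [] (s n)) (fun n => eq_refl)
                  (nth j pi CTop) []) as A1.
    pose proof (unfold_inst s Hs (fun n => unfold [] (s n)) (fun n => eq_refl)
                  (nth i pi CTop) []) as A2.
    simpl in A1, A2. rewrite A1, A2, Heq. reflexivity.
Qed.

Lemma valid_snoc Ax l Y : valid_proof Ax l -> closed Y ->
  (is_axiom Ax Y \/
   (exists j k, j < length l /\ k < length l /\ nth k l CTop = CImp (nth j l CTop) Y) \/
   (exists j, j < length l /\ unfold [] (nth j l CTop) = unfold [] Y)) ->
  valid_proof Ax (l ++ [Y]).
Proof.
  intros H HY J i Hi. rewrite length_app in Hi; simpl in Hi. cbv zeta.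
  destruct (lt_dec i (length l)) as [Hl|Hl].
  - specialize (H i Hl). cbv zeta in H. rewrite app_nth1 by auto.
    destruct H as [Hc [Ha | [(j & k & ? & ? & E) | (j & ? & E)]]]; split; auto.
    + right; left; exists j, k. rewrite !app_nth1 by lia. auto.
    + right; right; exists j. rewrite app_nth1 by lia. auto.
  - assert (i = length l) by lia. subst i.
    rewrite app_nth2 by lia. rewrite Nat.sub_diag. simpl. split; auto.
    destruct J as [Ha | [(j & k & ? & ? & E) | (j & ? & E)]]; auto.
    + right; left; exists j, k. rewrite !app_nth1 by lia. auto.
    + right; right; exists j. rewrite app_nth1 by lia. auto.
Qed.

Lemma valid_app Ax l1 l2 : valid_proof Ax l1 -> valid_proof Ax l2 ->
  valid_proof Ax (l1 ++ l2).
Proof.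
  intros H1 H2 i Hi. rewrite length_app in Hi. cbv zeta.
  destruct (lt_dec i (length l1)) as [Hl|Hl].
  - specialize (H1 i Hl). cbv zeta in H1. rewrite app_nth1 by auto.
    destruct H1 as [Hc [Ha | [(j & k & ? & ? & E) | (j & ? & E)]]]; split; auto.
    + right; left; exists j, k. rewrite !app_nth1 by lia. auto.
    + right; right; exists j. rewrite app_nth1 by lia. auto.
  - specialize (H2 (i - length l1) ltac:(lia)). cbv zeta in H2.
    rewrite app_nth2 by lia.
    destruct H2 as [Hc [Ha | [(j & k & ? & ? & E) | (j & ? & E)]]]; split; auto.
    + right; left; exists (j + length l1), (k + length l1).
      rewrite !app_nth2 by lia.
      replace (j + length l1 - length l1) with j by lia.
      replace (k + length l1 - length l1) with k by lia. split; [lia|split;[lia|auto]].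
    + right; right; exists (j + length l1). rewrite app_nth2 by lia.
      replace (j + length l1 - length l1) with j by lia. split; [lia|auto].
Qed.

Lemma last_nth' (l : list circ) d : l <> [] -> nth (length l - 1) l d = last l d.
Proof.
  induction l as [|a l IH]; intro H; [congruence|].
  destruct l as [|b l']; [reflexivity|].
  change (last (a :: b :: l') d) with (last (b :: l') d).
  rewrite <- IH by discriminate.
  simpl length.
  replace (S (S (length l')) - 1) with (S (length l')) by lia.
  replace (S (length l') - 1) with (length l') by lia.
  reflexivity.
Qed.

Lemma last_map' (f : circ -> circ) l d : last (map f l) (f d) = f (last l d).
Proof.
  induction l as [|a l IH]; [reflexivity|].
  destruct l as [|b l']; [reflexivity|]. simpl in *. exact IH.
Qed.

Lemma snoc_ne (l : list circ) Y : l ++ [Y] <> [].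
Proof. intro E. symmetry in E. eapply app_cons_not_nil; eauto. Qed.

Definition derivable Ax C := exists pi, proves Ax pi C.

Lemma closed_imp X Y : closed (CImp X Y) -> closed X /\ closed Y.
Proof. unfold closed; simpl; intro H; apply andb_true_iff in H; auto. Qed.

Lemma deriv_closed Ax C : derivable Ax C -> closed C.
Proof.
  intros (pi & Hne & Hv & Hl).
  assert (Hlen : length pi - 1 < length pi) by (destruct pi; [congruence|simpl; lia]).
  destruct (Hv _ Hlen) as [Hc _]. rewrite last_nth' in Hc; auto. congruence.
Qed.

Lemma deriv_ax Ax C : closed C -> is_axiom Ax C -> derivable Ax C.
Proof.
  intros Hc Ha. exists [C]. split; [discriminate|split; [|reflexivity]].
  intros i Hi. simpl in Hi. assert (i = 0) by lia. subst. simpl. auto.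
Qed.

Lemma deriv_mp Ax X Y : derivable Ax X -> derivable Ax (CImp X Y) -> derivable Ax Y.
Proof.
  intros HX HXY. pose proof (deriv_closed _ _ HXY) as HC.
  apply closed_imp in HC as [_ HY].
  destruct HX as (p1 & N1 & V1 & L1). destruct HXY as (p2 & N2 & V2 & L2).
  exists ((p1 ++ p2) ++ [Y]). split; [apply snoc_ne|split; [|apply last_last]].
  apply valid_snoc; auto. apply valid_app; auto.
  right; left. exists (length p1 - 1), (length p1 + length p2 - 1).
  assert (0 < length p1) by (destruct p1; [congruence|simpl; lia]).
  assert (0 < length p2) by (destruct p2; [congruence|simpl; lia]).
  rewrite length_app. split; [lia|split;[lia|]].
  rewrite (app_nth2 p1 p2 CTop (n := length p1 + length p2 - 1)) by lia.
  rewrite app_nth1 by lia.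
  replace (length p1 + length p2 - 1 - length p1) with (length p2 - 1) by lia.
  rewrite !last_nth' by auto. congruence.
Qed.

Lemma deriv_unf Ax X Y : derivable Ax X -> closed Y -> unfold [] X = unfold [] Y ->
  derivable Ax Y.
Proof.
  intros (p1 & N1 & V1 & L1) HY E.
  exists (p1 ++ [Y]). split; [apply snoc_ne|split; [|apply last_last]].
  apply valid_snoc; auto. right; right. exists (length p1 - 1).
  assert (0 < length p1) by (destruct p1; [congruence|simpl; lia]).
  split; [lia|]. rewrite last_nth' by auto. congruence.
Qed.

Definition sub3 (X Y Z : circ) (n : nat) : circ :=
  match n with 0 => X | 1 => Y | _ => Z end.

Lemma sub3_closed X Y Z : closed X -> closed Y -> closed Z -> forall n, closed (sub3 X Y Z n).
Proof. intros; destruct n as [|[|[|]]]; simpl; auto. Qed.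

Lemma frege_closed phi : In phi frege_axioms -> wf 0 phi = true.
Proof. simpl; intuition (subst; reflexivity). Qed.

Lemma deriv_schema Ax phi X Y Z : In phi frege_axioms -> closed X -> closed Y -> closed Z ->
  derivable Ax (inst (sub3 X Y Z) phi).
Proof.
  intros Hin HX HY HZ. apply deriv_ax.
  - unfold closed; apply wf_inst; [apply sub3_closed; auto|]. apply frege_closed; auto.
  - exists phi, (sub3 X Y Z). split; [left; auto|split; [apply sub3_closed; auto|reflexivity]].
Qed.

Ltac inax := simpl; repeat (first [left; reflexivity | right]).

Section Rules.
Variable Ax : circ -> bool.
Notation D := (derivable Ax).

Lemma axK X Y : closed X -> closed Y -> D (CImp X (CImp Y X)).
Proof. intros; exact (deriv_schema Ax (CImp p (CImp q p)) X Y CTop ltac:(inax) H H0 ctop). Qed.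
Lemma axS X Y Z : closed X -> closed Y -> closed Z ->
  D (CImp (CImp X (CImp Y Z)) (CImp (CImp X Y) (CImp X Z))).
Proof. intros; exact (deriv_schema Ax (CImp (CImp p (CImp q r)) (CImp (CImp p q) (CImp p r))) X Y Z ltac:(inax) H H0 H1). Qed.
Lemma axAndL X Y : closed X -> closed Y -> D (CImp (CAnd X Y) X).
Proof. intros; exact (deriv_schema Ax (CImp (CAnd p q) p) X Y CTop ltac:(inax) H H0 ctop). Qed.
Lemma axAndR X Y : closed X -> closed Y -> D (CImp (CAnd X Y) Y).
Proof. intros; exact (deriv_schema Ax (CImp (CAnd p q) q) X Y CTop ltac:(inax) H H0 ctop). Qed.
Lemma axAndI X Y : closed X -> closed Y -> D (CImp X (CImp Y (CAnd X Y))).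
Proof. intros; exact (deriv_schema Ax (CImp p (CImp q (CAnd p q))) X Y CTop ltac:(inax) H H0 ctop). Qed.
Lemma axOrL X Y : closed X -> closed Y -> D (CImp X (COr X Y)).
Proof. intros; exact (deriv_schema Ax (CImp p (COr p q)) X Y CTop ltac:(inax) H H0 ctop). Qed.
Lemma axOrR X Y : closed X -> closed Y -> D (CImp Y (COr X Y)).
Proof. intros; exact (deriv_schema Ax (CImp q (COr p q)) X Y CTop ltac:(inax) H H0 ctop). Qed.
Lemma axOrE X Y Z : closed X -> closed Y -> closed Z ->
  D (CImp (CImp X Z) (CImp (CImp Y Z) (CImp (COr X Y) Z))).
Proof. intros; exact (deriv_schema Ax (CImp (CImp p r) (CImp (CImp q r) (CImp (COr p q) r))) X Y Z ltac:(inax) H H0 H1). Qed.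
Lemma axBot X : closed X -> D (CImp CBot X).
Proof. intros; exact (deriv_schema Ax (CImp CBot p) X CTop CTop ltac:(inax) H ctop ctop). Qed.
Lemma axTop : D CTop.
Proof. exact (deriv_schema Ax CTop CTop CTop CTop ltac:(inax) ctop ctop ctop). Qed.
Lemma axNotI X : closed X -> D (CImp (CImp X CBot) (CNot X)).
Proof. intros; exact (deriv_schema Ax (CImp (CImp p CBot) (CNot p)) X CTop CTop ltac:(inax) H ctop ctop). Qed.
Lemma axNotE X : closed X -> D (CImp (CNot X) (CImp X CBot)).
Proof. intros; exact (deriv_schema Ax (CImp (CNot p) (CImp p CBot)) X CTop CTop ltac:(inax) H ctop ctop). Qed.

Lemma rtrans X Y Z : D (CImp X Y) -> D (CImp Y Z) -> D (CImp X Z).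
Proof.
  intros H1 H2.
  destruct (closed_imp _ _ (deriv_closed _ _ H1)) as [cX cY].
  destruct (closed_imp _ _ (deriv_closed _ _ H2)) as [_ cZ].
  assert (cYZ : closed (CImp Y Z)) by (unfold closed; simpl; rewrite cY, cZ; auto).
  eapply deriv_mp; [exact H1|].
  eapply deriv_mp; [|apply axS; auto].
  eapply deriv_mp; [exact H2|apply axK; auto].
Qed.

Lemma rdrop X Y Z : D (CImp X (CImp Y Z)) -> D Y -> D (CImp X Z).
Proof.
  intros H1 H2.
  destruct (closed_imp _ _ (deriv_closed _ _ H1)) as [cX cYZ].
  destruct (closed_imp _ _ cYZ) as [cY cZ].
  eapply deriv_mp; [|eapply deriv_mp; [exact H1|apply axS; auto]].
  eapply deriv_mp; [exact H2|apply axK; auto].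
Qed.

Lemma rid X : closed X -> D (CImp X X).
Proof.
  intro cX.
  assert (cXX : closed (CImp X X)) by (unfold closed; simpl; rewrite cX; auto).
  eapply deriv_mp; [apply (axK X X); auto|].
  eapply deriv_mp; [apply (axK X (CImp X X)); auto|].
  apply axS; auto.
Qed.

Lemma kalmar (v : nat -> bool) f :
  let g := emb (fsub (fun n => if v n then FTop else FBot) f) in
  if feval v f then D g else D (CImp g CBot).
Proof.
  induction f; simpl in *.
  - destruct (v n); simpl; [apply axTop|apply axBot; auto].
  - apply axTop.
  - apply axBot; auto.
  - destruct (feval v f); simpl.
    + eapply rdrop; [apply axNotE; auto|exact IHf].
    + eapply deriv_mp; [exact IHf|apply axNotI; auto].
  - destruct (feval v f1), (feval v f2); simpl.
    + eapply deriv_mp; [exact IHf2|]. eapply deriv_mp; [exact IHf1|]. apply axAndI; auto.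
    + eapply rtrans; [apply axAndR; auto|exact IHf2].
    + eapply rtrans; [apply axAndL; auto|exact IHf1].
    + eapply rtrans; [apply axAndL; auto|exact IHf1].
  - destruct (feval v f1), (feval v f2); simpl.
    + eapply deriv_mp; [exact IHf1|apply axOrL; auto].
    + eapply deriv_mp; [exact IHf1|apply axOrL; auto].
    + eapply deriv_mp; [exact IHf2|apply axOrR; auto].
    + eapply deriv_mp; [exact IHf2|]. eapply deriv_mp; [exact IHf1|]. apply axOrE; auto.
  - destruct (feval v f1), (feval v f2); simpl.
    + eapply deriv_mp; [exact IHf2|apply axK; auto].
    + set (a := emb (fsub (fun n => if v n then FTop else FBot) f1)) in *.
      set (b := emb (fsub (fun n => if v n then FTop else FBot) f2)) in *.
      assert (ca : closed a) by apply cemb.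
      assert (cb : closed b) by apply cemb.
      assert (cW : closed (CImp a b)) by (unfold closed; simpl; rewrite ca, cb; auto).
      eapply rtrans; [|exact IHf2].
      apply (deriv_mp _ (CImp (CImp a b) a)).
      * eapply deriv_mp; [exact IHf1| apply (axK a (CImp a b)); auto].
      * eapply deriv_mp; [apply (rid (CImp a b)); auto| apply axS; auto].
    + eapply rtrans; [exact IHf1|apply axBot; auto].
    + eapply rtrans; [exact IHf1|apply axBot; auto].
Qed.

End Rules.

Fixpoint plen_app l1 l2 : plen (l1 ++ l2) = plen l1 + plen l2.
Proof. destruct l1; simpl; [reflexivity|]. rewrite plen_app. lia. Qed.

Lemma csize_pos c : 1 <= csize c.
Proof. destruct c; simpl; lia. Qed.

Theorem mainTheorem5 (Ax : circ -> bool) :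
  ~ sound Ax ->
  exists c : nat, forall A : circ, closed A ->
    exists pi : list circ, proves Ax pi A /\ plen pi <= c * csize A.
Proof.
  intro Hns. unfold sound in Hns.
  apply not_all_ex_not in Hns as [pi Hns].
  apply not_all_ex_not in Hns as [A Hns].
  apply imply_to_and in Hns as [Hpr Hnt].
  unfold tautology in Hnt. apply not_all_ex_not in Hnt as [v Hv].
  assert (Hf : feval v (unfold [] A) = false) by (destruct (feval v (unfold [] A)); congruence).
  set (s := fun n => if v n then CTop else CBot).
  assert (Hs : forall n, closed (s n)) by (intro n; unfold s; destruct (v n); reflexivity).
  set (t := fun n => if v n then FTop else FBot).
  assert (Ht : forall n, unfold [] (s n) = t n) by (intro n; unfold s, t; destruct (v n); reflexivity).
  assert (HD : derivable Ax (inst s A)).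
  { destruct Hpr as (N & V & L). exists (map (inst s) pi). split; [|split].
    - destruct pi; [congruence|discriminate].
    - apply valid_map; auto.
    - rewrite <- L. exact (last_map' (inst s) pi CTop). }
  assert (HD2 : derivable Ax (emb (fsub t (unfold [] A)))).
  { eapply deriv_unf; [exact HD|apply cemb|].
    rewrite unfold_emb. exact (unfold_inst s Hs t Ht A []). }
  pose proof (kalmar Ax v (unfold [] A)) as HK. simpl in HK. rewrite Hf in HK.
  assert (HB : derivable Ax CBot) by (eapply deriv_mp; [exact HD2|exact HK]).
  destruct HB as (pb & Nb & Vb & Lb).
  exists (plen pb + 4). intros B HBc.
  exists ((pb ++ [CImp CBot B]) ++ [B]). split.
  - split; [apply snoc_ne|split; [|apply last_last]].
    assert (cI : closed (CImp CBot B)) by (unfold closed; simpl; exact HBc).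
    assert (0 < length pb) by (destruct pb; [congruence|simpl; lia]).
    apply valid_snoc; auto.
    + apply valid_snoc; auto. left.
      exists (CImp CBot p), (sub3 B CTop CTop).
      split; [left; inax|split; [apply sub3_closed; auto|reflexivity]].
    + right; left. exists (length pb - 1), (length pb).
      rewrite length_app; simpl. split; [lia|split; [lia|]].
      rewrite (app_nth2 pb [CImp CBot B] CTop (n := length pb)) by lia.
      rewrite app_nth1 by lia. rewrite Nat.sub_diag. simpl.
      rewrite last_nth' by auto. congruence.
  - rewrite !plen_app. simpl. pose proof (csize_pos B). nia.
Qed.
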